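(* Let $(\mathcal V,[\cdot,\cdots,\cdot],S)$ be a generalized metric $n$-Leibniz algebra and $\mathfrak g=\mathrm{Im}\,D\subset\mathfrak{gl}(\mathcal V)$ with the commutator bracket $[\cdot,\cdot]_C$. There is a well-defined bilinear form $\omega$ on $\mathfrak g$ determined by $$\omega(D(u_1,\dots,u_{n-1}),D(v_1,\dots,v_{n-1}))=S(D(u_1,\dots,u_{n-1})v_1,v_2,\dots,v_{n-1}),$$ and $\omega$ is symmetric, non-degenerate and ad-invariant (i.e. $\omega([x,y]_C,z)=-\omega(y,[x,z]_C)$ for $x,y,z\in\mathfrak g$). Consequently $(\mathfrak g,[\cdot,\cdot]_C,\omega)$ is a metric Lie algebra.
   Context: All vector spaces are finite-dimensional over $\mathbb R$. An $n$-Leibniz algebra is a vector space $\mathcal V$ with an $n$-linear map $[\cdot,\cdots,\cdot]$ satisfying $[u_1,\dots,u_{n-1},[v_1,\dots,v_n]]=\sum_{i=1}^n[v_1,\dots,[u_1,\dots,u_{n-1},v_i],\dots,v_n]$. A symmetric $S\in\mathrm{Sym}^{n-1}(\mathcal V^* )$ is non-degenerate if $S(u,v_1,\dots,v_{n-2})=0$ for all $v_j$ implies $u=0$. A generalized metric $n$-Leibniz algebra is an $n$-Leibniz algebra with a symmetric non-degenerate $S\in\mathrm{Sym}^{n-1}(\mathcal V^* )$ satisfying (a) unitarity: $\sum_{i=1}^{n-1}S(v_1,\dots,[u_1,\dots,u_{n-1},v_i],\dots,v_{n-1})=0$ and (b) symmetry: $S([u_1,\dots,u_{n-1},v_1],v_2,\dots,v_{n-1})=S([v_1,\dots,v_{n-1},u_1],u_2,\dots,u_{n-1})$.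 $D(u_1,\dots,u_{n-1})\in\mathfrak{gl}(\mathcal V)$ is $u_n\mapsto[u_1,\dots,u_{n-1},u_n]$, extended linearly to $\otimes^{n-1}\mathcal V$; $\mathfrak g=\mathrm{Im}\,D$ is the span of all such operators, which is closed under the commutator $[A,B]_C=AB-BA$. A metric Lie algebra is a Lie algebra with a symmetric non-degenerate bilinear form $\omega$ with $\omega([x,y],z)=-\omega(y,[x,z])$. *)

(* Defs.v *)
(* The base field R (= the reals in the paper) is an arbitrary
   realFieldType; V = 'cV[R]_d is an arbitrary finite-dimensional space;
   operators on V are d x d matrices acting on column vectors (A *m v), so
   composition of operators is matrix product. n = k.+2 (so n >= 2). *)
From HB Require Import structures.
From mathcomp Require Import all_boot all_order all_algebra all_fingroup.
Set Implicit Arguments. Unset Strict Implicit. Unset Printing Implicit Defensive.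
Import Order.TTheory GRing.Theory Num.Theory.
Local Open Scope ring_scope.

Definition upd (T : Type) (m : nat) (f : {ffun 'I_m -> T}) (i : 'I_m) (x : T)
  : {ffun 'I_m -> T} := [ffun j => if j == i then x else f j].

Definition snoc (T : Type) (m : nat) (u : {ffun 'I_m -> T}) (w : T)
  : {ffun 'I_m.+1 -> T} :=
  [ffun j => if unlift ord_max j is Some l then u l else w].

Definition consv (T : Type) (m : nat) (w : T) (v : {ffun 'I_m -> T})
  : {ffun 'I_m.+1 -> T} :=
  [ffun j => if unlift ord0 j is Some l then v l else w].

Definition multilinear (R : realFieldType) (V W : lmodType R) (m : nat)
  (F : {ffun 'I_m -> V} -> W) : Prop :=
  forall (f : {ffun 'I_m -> V}) (i : 'I_m) (a : R) (x y : V),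
    F (upd f i (a *: x + y)) = a *: F (upd f i x) + F (upd f i y).

Definition multilinear_form (R : realFieldType) (V : lmodType R) (m : nat)
  (F : {ffun 'I_m -> V} -> R) : Prop :=
  forall (f : {ffun 'I_m -> V}) (i : 'I_m) (a : R) (x y : V),
    F (upd f i (a *: x + y)) = a * F (upd f i x) + F (upd f i y).

Definition symmetric_form (R : realFieldType) (V : lmodType R) (m : nat)
  (F : {ffun 'I_m -> V} -> R) : Prop :=
  forall (f : {ffun 'I_m -> V}) (s : 'S_m), F [ffun j => f (s j)] = F f.

Section Defs.
Variables (R : realFieldType) (d k : nat).
Local Notation V := 'cV[R]_d.
Variable br : {ffun 'I_k.+2 -> V} -> V.
Variable S : {ffun 'I_k.+1 -> V} -> R.

Definition Dop (u : {ffun 'I_k.+1 -> V}) (w : V) : V := br (snoc u w).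

Definition Dmx (u : {ffun 'I_k.+1 -> V}) : 'M[R]_d :=
  \matrix_(i, j) Dop u (delta_mx j 0) i 0.

Definition leibniz_identity : Prop :=
  forall (u : {ffun 'I_k.+1 -> V}) (v : {ffun 'I_k.+2 -> V}),
    Dop u (br v) = \sum_(i < k.+2) br (upd v i (Dop u (v i))).

Definition nondegenerate : Prop :=
  forall u : V, (forall v : {ffun 'I_k -> V}, S (consv u v) = 0) -> u = 0.

Definition unitarity : Prop :=
  forall (u v : {ffun 'I_k.+1 -> V}),
    \sum_(i < k.+1) S (upd v i (Dop u (v i))) = 0.

Definition symmetry_cond : Prop :=
  forall (u v : {ffun 'I_k.+1 -> V}),
    S (upd v ord0 (Dop u (v ord0))) = S (upd u ord0 (Dop v (u ord0))).

Definition generalized_metric_nLeibniz : Prop :=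
  [/\ multilinear br, leibniz_identity, multilinear_form S & symmetric_form S] /\
  [/\ nondegenerate, unitarity & symmetry_cond].

Definition inImD (x : 'M[R]_d) : Prop :=
  exists l : seq ({ffun 'I_k.+1 -> V} * R),
    x = \sum_(p <- l) p.2 *: Dmx p.1.
End Defs.

Definition commC (R : realFieldType) (d : nat) (x y : 'M[R]_d) : 'M[R]_d :=
  x *m y - y *m x.

(* Main.v *)
Require Import Defs.
From HB Require Import structures.
From mathcomp Require Import all_boot all_order all_algebra all_fingroup.
From Stdlib Require Import ClassicalEpsilon.
Import GRing.Theory Num.Theory.
Local Open Scope ring_scope.
Set Implicit Arguments. Unset Strict Implicit.

Lemma upd_same (T : Type) m (f : {ffun 'I_m -> T}) i x : upd f i x i = x.
Proof. by rewrite /upd ffunE eqxx. Qed.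
Lemma upd_other (T : Type) m (f : {ffun 'I_m -> T}) i j x : j != i -> upd f i x j = f j.
Proof. by rewrite /upd ffunE => /negbTE ->. Qed.
Lemma upd_upd (T : Type) m (f : {ffun 'I_m -> T}) i x y : upd (upd f i x) i y = upd f i y.
Proof. by apply/ffunP => j; rewrite /upd !ffunE; case: eqP. Qed.
Lemma upd_comm (T : Type) m (f : {ffun 'I_m -> T}) i j x y : i != j ->
  upd (upd f i x) j y = upd (upd f j y) i x.
Proof.
move=> nij; apply/ffunP => l; rewrite /upd !ffunE.
case: (eqVneq l j) => [-> | //]; by rewrite eq_sym (negbTE nij).
Qed.
Lemma upd_snoc_max (T : Type) m (u : {ffun 'I_m -> T}) w z :
  upd (snoc u w) ord_max z = snoc u z.
Proof.
apply/ffunP => j; rewrite /upd /snoc !ffunE.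
case: unliftP => [l -> | ->]; last by rewrite eqxx.
by rewrite eq_sym (negbTE (neq_lift _ _)).
Qed.
Lemma upd_snoc_lift (T : Type) m (u : {ffun 'I_m -> T}) w i z :
  upd (snoc u w) (lift ord_max i) z = snoc (upd u i z) w.
Proof.
apply/ffunP => j; rewrite /upd /snoc !ffunE.
case: unliftP => [l -> | ->]; last by rewrite (negbTE (neq_lift _ _)).
by rewrite (inj_eq (@lift_inj _ _)) ffunE.
Qed.
Lemma snoc_lift (T : Type) m (u : {ffun 'I_m -> T}) w i : snoc u w (lift ord_max i) = u i.
Proof. by rewrite /snoc ffunE liftK. Qed.
Lemma snoc_max (T : Type) m (u : {ffun 'I_m -> T}) w : snoc u w ord_max = w.
Proof. by rewrite /snoc ffunE unlift_none. Qed.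
Lemma consv0 (T : Type) m (w : T) (v : {ffun 'I_m -> T}) : consv w v ord0 = w.
Proof. by rewrite /consv ffunE unlift_none. Qed.
Lemma upd_consv (T : Type) m (w z : T) (v : {ffun 'I_m -> T}) :
  upd (consv w v) ord0 z = consv z v.
Proof.
apply/ffunP => j; rewrite /upd /consv !ffunE.
case: unliftP => [l -> | ->]; last by rewrite eqxx.
by rewrite eq_sym (negbTE (neq_lift _ _)).
Qed.

Lemma lin_sum (R : realFieldType) (U W : lmodType R) (L : U -> W)
  (HL : forall a x y, L (a *: x + y) = a *: L x + L y)
  (I : Type) (r : seq I) (c : I -> R) (e : I -> U) :
  L (\sum_(i <- r) c i *: e i) = \sum_(i <- r) c i *: L (e i).
Proof.
have L0 : L 0 = 0.
  have := HL 1 0 0; rewrite !scale1r addr0 -{1}[L 0]addr0. by move/addrI/esym.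
apply: (big_rec2 (fun a b => L a = b)) => // i y1 y2 _ <-.
by rewrite HL.
Qed.

Lemma lin_sumf (R : realFieldType) (U : lmodType R) (L : U -> R)
  (HL : forall a x y, L (a *: x + y) = a * L x + L y)
  (I : Type) (r : seq I) (c : I -> R) (e : I -> U) :
  L (\sum_(i <- r) c i *: e i) = \sum_(i <- r) c i * L (e i).
Proof.
have L0 : L 0 = 0.
  have := HL 1 0 0; rewrite !scale1r !mul1r addr0 -{1}[L 0]addr0. by move/addrI/esym.
apply: (big_rec2 (fun a b => L a = b)) => // i y1 y2 _ <-.
by rewrite HL.
Qed.

Lemma mx_ext (R : realFieldType) d (A B : 'M[R]_d) :
  (forall w : 'cV[R]_d, A *m w = B *m w) -> A = B.
Proof.
move=> H; apply/matrixP => i j.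
have := congr1 (fun M : 'cV[R]_d => M i 0) (H (delta_mx j 0)).
by rewrite -!colE !mxE.
Qed.

Lemma Dop_lin (R : realFieldType) d k (br : {ffun 'I_k.+2 -> 'cV[R]_d} -> 'cV[R]_d)
  (Hbr : multilinear br) u a x y :
  Dop br u (a *: x + y) = a *: Dop br u x + Dop br u y.
Proof. by have := Hbr (snoc u 0) ord_max a x y; rewrite !upd_snoc_max. Qed.

Lemma Dmx_mul (R : realFieldType) d k (br : {ffun 'I_k.+2 -> 'cV[R]_d} -> 'cV[R]_d)
  (Hbr : multilinear br) u (w : 'cV[R]_d) : Dmx br u *m w = Dop br u w.
Proof.
have Hw : w = \sum_(j < d) w j 0 *: delta_mx j 0.
  by rewrite {1}(matrix_sum_delta w); apply: eq_bigr => j _; rewrite big_ord1.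
rewrite {2}Hw (lin_sum (Dop_lin Hbr u)).
apply/matrixP => i z; rewrite (ord1 z) !mxE summxE.
by apply: eq_bigr => j _; rewrite !mxE mulrC.
Qed.

Lemma Dmx_lin (R : realFieldType) d k (br : {ffun 'I_k.+2 -> 'cV[R]_d} -> 'cV[R]_d)
  (Hbr : multilinear br) u i a x y :
  Dmx br (upd u i (a *: x + y)) = a *: Dmx br (upd u i x) + Dmx br (upd u i y).
Proof.
apply/matrixP => p q; rewrite !mxE /Dop -!upd_snoc_lift.
by rewrite Hbr !mxE.
Qed.

Definition Fm (R : realFieldType) d k (S : {ffun 'I_k.+1 -> 'cV[R]_d} -> R)
  (x : 'M[R]_d) (v : {ffun 'I_k.+1 -> 'cV[R]_d}) : R := S (upd v ord0 (x *m v ord0)).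

Definition rep (R : realFieldType) d k (br : {ffun 'I_k.+2 -> 'cV[R]_d} -> 'cV[R]_d)
  (y : 'M[R]_d) : seq ({ffun 'I_k.+1 -> 'cV[R]_d} * R) :=
  epsilon (inhabits [::]) (fun l => y = \sum_(p <- l) p.2 *: Dmx br p.1).

Definition omg (R : realFieldType) d k (br : {ffun 'I_k.+2 -> 'cV[R]_d} -> 'cV[R]_d)
  (S : {ffun 'I_k.+1 -> 'cV[R]_d} -> R) (x y : 'M[R]_d) : R :=
  \sum_(p <- rep br y) p.2 * Fm S x p.1.

Lemma F_lin (R : realFieldType) d k (S : {ffun 'I_k.+1 -> 'cV[R]_d} -> R)
  (HS : multilinear_form S) a x y v :
  Fm S (a *: x + y) v = a * Fm S x v + Fm S y v.
Proof. by rewrite /Fm mulmxDl -scalemxAl HS. Qed.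

Lemma F_D (R : realFieldType) d k (br : {ffun 'I_k.+2 -> 'cV[R]_d} -> 'cV[R]_d)
  (S : {ffun 'I_k.+1 -> 'cV[R]_d} -> R) (Hbr : multilinear br) u v :
  Fm S (Dmx br u) v = S (upd v ord0 (Dop br u (v ord0))).
Proof. by rewrite /Fm Dmx_mul. Qed.

Lemma F_sym (R : realFieldType) d k (br : {ffun 'I_k.+2 -> 'cV[R]_d} -> 'cV[R]_d)
  (S : {ffun 'I_k.+1 -> 'cV[R]_d} -> R) (Hbr : multilinear br)
  (Hsym : symmetry_cond br S) u v :
  Fm S (Dmx br u) v = Fm S (Dmx br v) u.
Proof. by rewrite !F_D // Hsym. Qed.

Lemma F_swap (R : realFieldType) d k (br : {ffun 'I_k.+2 -> 'cV[R]_d} -> 'cV[R]_d)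
  (S : {ffun 'I_k.+1 -> 'cV[R]_d} -> R) (Hbr : multilinear br)
  (HS : multilinear_form S) (Hsym : symmetry_cond br S) l m :
  \sum_(p <- m) p.2 * Fm S (\sum_(q <- l) q.2 *: Dmx br q.1) p.1 =
  \sum_(q <- l) q.2 * Fm S (\sum_(p <- m) p.2 *: Dmx br p.1) q.1.
Proof.
transitivity (\sum_(p <- m) \sum_(q <- l) p.2 * q.2 * Fm S (Dmx br p.1) q.1).
  apply: eq_bigr => p _.
  rewrite (lin_sumf (L := fun x => Fm S x p.1)); last by move=> *; apply: F_lin.
  rewrite big_distrr; apply: eq_bigr => q _ /=.
  by rewrite (F_sym Hbr Hsym) mulrA.
rewrite exchange_big; apply: eq_bigr => q _.
rewrite (lin_sumf (L := fun x => Fm S x q.1)); last by move=> *; apply: F_lin.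
rewrite big_distrr; apply: eq_bigr => p _ /=.
by rewrite mulrA [p.2 * _]mulrC.
Qed.

Lemma rep_spec (R : realFieldType) d k (br : {ffun 'I_k.+2 -> 'cV[R]_d} -> 'cV[R]_d) y :
  inImD br y -> y = \sum_(p <- rep br y) p.2 *: Dmx br p.1.
Proof. by move=> Hy; rewrite /rep; apply: (epsilon_spec (inhabits [::]) _ Hy). Qed.

Lemma omg_any2 (R : realFieldType) d k (br : {ffun 'I_k.+2 -> 'cV[R]_d} -> 'cV[R]_d)
  (S : {ffun 'I_k.+1 -> 'cV[R]_d} -> R) (Hbr : multilinear br)
  (HS : multilinear_form S) (Hsym : symmetry_cond br S) z y l :
  inImD br y -> z = \sum_(q <- l) q.2 *: Dmx br q.1 ->
  omg br S z y = \sum_(q <- l) q.2 * Fm S y q.1.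
Proof.
move=> Hy ->; rewrite /omg (F_swap Hbr HS Hsym).
by rewrite -(rep_spec Hy).
Qed.

Lemma omg_any1 (R : realFieldType) d k (br : {ffun 'I_k.+2 -> 'cV[R]_d} -> 'cV[R]_d)
  (S : {ffun 'I_k.+1 -> 'cV[R]_d} -> R) (Hbr : multilinear br)
  (HS : multilinear_form S) (Hsym : symmetry_cond br S) z y m :
  inImD br z -> y = \sum_(p <- m) p.2 *: Dmx br p.1 ->
  omg br S z y = \sum_(p <- m) p.2 * Fm S z p.1.
Proof.
move=> [l Hl] Hym.
have Hy : inImD br y by exists m.
rewrite (omg_any2 Hbr HS Hsym Hy Hl) Hym Hl.
by rewrite (F_swap Hbr HS Hsym).
Qed.

Lemma inImD_lin (R : realFieldType) d k (br : {ffun 'I_k.+2 -> 'cV[R]_d} -> 'cV[R]_d) a x y :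
  inImD br x -> inImD br y -> inImD br (a *: x + y).
Proof.
move=> [l ->] [m ->].
exists ([seq (p.1, a * p.2) | p <- l] ++ m).
rewrite big_cat big_map /= scaler_sumr; congr (_ + _).
by apply: eq_bigr => p _; rewrite scalerA.
Qed.

Lemma inImD0 (R : realFieldType) d k (br : {ffun 'I_k.+2 -> 'cV[R]_d} -> 'cV[R]_d) :
  inImD br 0.
Proof. by exists [::]; rewrite big_nil. Qed.

Lemma inImD_sum (R : realFieldType) d k (br : {ffun 'I_k.+2 -> 'cV[R]_d} -> 'cV[R]_d)
  (I : Type) (r : seq I) (f : I -> 'M[R]_d) :
  (forall i, inImD br (f i)) -> inImD br (\sum_(i <- r) f i).
Proof.
move=> H; apply: (big_rec (fun x => inImD br x)); first exact: inImD0.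
by move=> i x _ Hx; rewrite -[f i]scale1r; apply: inImD_lin.
Qed.

Lemma inImD_D (R : realFieldType) d k (br : {ffun 'I_k.+2 -> 'cV[R]_d} -> 'cV[R]_d) u :
  Dmx br u = \sum_(p <- [:: (u, 1)]) p.2 *: Dmx br p.1.
Proof. by rewrite big_seq1 scale1r. Qed.

Lemma Leib (R : realFieldType) d k (br : {ffun 'I_k.+2 -> 'cV[R]_d} -> 'cV[R]_d)
  (Hbr : multilinear br) (Hl : leibniz_identity br) u v :
  commC (Dmx br u) (Dmx br v) = \sum_(i < k.+1) Dmx br (upd v i (Dop br u (v i))).
Proof.
apply: mx_ext => w.
rewrite /commC mulmxBl -!mulmxA !Dmx_mul // mulmx_suml.
under eq_bigr => i _ do rewrite Dmx_mul //.
have E := Hl u (snoc v w).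
rewrite big_ord_recr /= snoc_max upd_snoc_max in E.
rewrite /Dop in E *; rewrite E addrK.
apply: eq_bigr => i _.
have -> : widen_ord (leqnSn k.+1) i = lift ord_max i.
  by apply: val_inj; rewrite /= /bump leqNgt ltn_ord.
by rewrite snoc_lift upd_snoc_lift.
Qed.

Lemma F_add (R : realFieldType) d k (S : {ffun 'I_k.+1 -> 'cV[R]_d} -> R)
  (HS : multilinear_form S) x y v : Fm S (x + y) v = Fm S x v + Fm S y v.
Proof. by rewrite -[x]scale1r F_lin // mul1r scale1r. Qed.

Lemma F_0 (R : realFieldType) d k (S : {ffun 'I_k.+1 -> 'cV[R]_d} -> R)
  (HS : multilinear_form S) v : Fm S 0 v = 0.
Proof. by have := F_add HS 0 0 v; rewrite addr0 -{1}[Fm S 0 v]addr0 => /addrI/esym. Qed.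

Lemma F_sub (R : realFieldType) d k (S : {ffun 'I_k.+1 -> 'cV[R]_d} -> R)
  (HS : multilinear_form S) x y v : Fm S (x - y) v = Fm S x v - Fm S y v.
Proof.
rewrite F_add //; congr (_ + _).
by have := F_lin HS (-1) y 0 v; rewrite addr0 F_0 // addr0 scaleN1r mulN1r.
Qed.

Lemma F_sum (R : realFieldType) d k (S : {ffun 'I_k.+1 -> 'cV[R]_d} -> R)
  (HS : multilinear_form S) (I : Type) (r : seq I) f v :
  Fm S (\sum_(i <- r) f i) v = \sum_(i <- r) Fm S (f i) v.
Proof.
apply: (big_rec2 (fun a b => Fm S a v = b)); first exact: F_0.
by move=> i y1 y2 _ <-; rewrite F_add.
Qed.

Lemma inImD_scale (R : realFieldType) d k (br : {ffun 'I_k.+2 -> 'cV[R]_d} -> 'cV[R]_d) a x :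
  inImD br x -> inImD br (a *: x).
Proof. by move=> Hx; rewrite -[a *: x]addr0; apply: inImD_lin => //; apply: inImD0. Qed.

Lemma commC_linl (R : realFieldType) d a (x y z : 'M[R]_d) :
  commC (a *: x + y) z = a *: commC x z + commC y z.
Proof.
by rewrite /commC mulmxDl mulmxDr -scalemxAl -scalemxAr scalerBr opprD addrACA.
Qed.

Lemma commC_linr (R : realFieldType) d a (x y z : 'M[R]_d) :
  commC z (a *: x + y) = a *: commC z x + commC z y.
Proof.
by rewrite /commC mulmxDl mulmxDr -scalemxAl -scalemxAr scalerBr opprD addrACA.
Qed.

Lemma closure (R : realFieldType) d k (br : {ffun 'I_k.+2 -> 'cV[R]_d} -> 'cV[R]_d)
  (Hbr : multilinear br) (Hl : leibniz_identity br) x y :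
  inImD br x -> inImD br y -> inImD br (commC x y).
Proof.
move=> [l ->] [m ->].
rewrite (lin_sum (L := fun x => commC x _)); last by move=> *; apply: commC_linl.
apply: inImD_sum => p; apply: inImD_scale.
rewrite (lin_sum (L := fun x => commC _ x)); last by move=> *; apply: commC_linr.
apply: inImD_sum => q; apply: inImD_scale.
rewrite Leib //; apply: inImD_sum => i.
by exists [:: (upd q.1 i (Dop br p.1 (q.1 i)), 1)]; rewrite big_seq1 scale1r.
Qed.

Lemma K_gen (R : realFieldType) d k (br : {ffun 'I_k.+2 -> 'cV[R]_d} -> 'cV[R]_d)
  (S : {ffun 'I_k.+1 -> 'cV[R]_d} -> R) (Hbr : multilinear br) (Hl : leibniz_identity br)
  (HS : multilinear_form S) (Hsym : symmetry_cond br S) (Hun : unitarity br S) u v w :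
  Fm S (commC (Dmx br u) (Dmx br v)) w = - Fm S (commC (Dmx br u) (Dmx br w)) v.
Proof.
rewrite (Leib Hbr Hl u w) F_sum //.
under eq_bigr => i _ do rewrite (F_sym Hbr Hsym).
have Hu := Hun u (upd w ord0 (Dop br v (w ord0))).
rewrite big_ord_recl in Hu; rewrite big_ord_recl.
rewrite /commC F_sub // /Fm -!mulmxA !Dmx_mul //.
rewrite !upd_upd !upd_same in Hu *.
set s := \sum_(i < k) _.
set s' := \sum_(i < k) _ in Hu.
have -> : s = s'.
  rewrite /s /s'; apply: eq_bigr => j _.
  have nj : lift ord0 j != ord0 by rewrite eq_sym neq_lift.
  by rewrite upd_other ?neq_lift // upd_comm // Dmx_mul // upd_other.
move: Hu => /eqP; rewrite addr_eq0 => /eqP ->.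
by rewrite opprD addrC.
Qed.

Lemma K_all (R : realFieldType) d k (br : {ffun 'I_k.+2 -> 'cV[R]_d} -> 'cV[R]_d)
  (S : {ffun 'I_k.+1 -> 'cV[R]_d} -> R) (Hbr : multilinear br) (Hl : leibniz_identity br)
  (HS : multilinear_form S) (Hsym : symmetry_cond br S) (Hun : unitarity br S) x v w :
  inImD br x ->
  Fm S (commC x (Dmx br v)) w = - Fm S (commC x (Dmx br w)) v.
Proof.
move=> [l ->]; apply/eqP; rewrite -addr_eq0; apply/eqP.
rewrite (lin_sumf (L := fun t => Fm S (commC t (Dmx br v)) w + Fm S (commC t (Dmx br w)) v)).
  by rewrite big1 // => p _; rewrite (K_gen Hbr Hl HS Hsym Hun) addNr mulr0.
by move=> a x1 y1; rewrite !commC_linl !F_lin // mulrDr !addrA; congr (_ + _);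
  rewrite -!addrA; congr (_ + _); rewrite addrC.
Qed.

Lemma inImD_Dmx (R : realFieldType) d k (br : {ffun 'I_k.+2 -> 'cV[R]_d} -> 'cV[R]_d) u :
  inImD br (Dmx br u).
Proof. by exists [:: (u, 1)]; apply: inImD_D. Qed.

Theorem mainTheorem3 (R : realFieldType) (d k : nat)
  (br : {ffun 'I_k.+2 -> 'cV[R]_d} -> 'cV[R]_d)
  (S : {ffun 'I_k.+1 -> 'cV[R]_d} -> R) :
  generalized_metric_nLeibniz br S ->
  (forall x y, inImD br x -> inImD br y -> inImD br (commC x y)) /\
  exists omega : 'M[R]_d -> 'M[R]_d -> R,
    [/\ (* bilinear on g *)
        (forall (a : R) x y z, inImD br x -> inImD br y -> inImD br z ->
           omega (a *: x + y) z = a * omega x z + omega y z /\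
           omega z (a *: x + y) = a * omega z x + omega z y),
        (* the defining formula *)
        (forall u v : {ffun 'I_k.+1 -> 'cV[R]_d},
           omega (Dmx br u) (Dmx br v) = S (upd v ord0 (Dop br u (v ord0)))),
        (* symmetric *)
        (forall x y, inImD br x -> inImD br y -> omega x y = omega y x),
        (* non-degenerate *)
        (forall x, inImD br x -> (forall y, inImD br y -> omega x y = 0) -> x = 0)
      & (* ad-invariant *)
        (forall x y z, inImD br x -> inImD br y -> inImD br z ->
           omega (commC x y) z = - omega y (commC x z))].
Proof.
move=> [[Hbr Hl HS Hsy] [Hnd Hun Hsym]].
split; first by move=> x y; apply: closure.
exists (omg br S); split.
- move=> a x y z Hx Hy Hz; split.
    rewrite /omg !big_distrr -big_split; apply: eq_bigr => p _ /=.
    by rewrite F_lin // mulrDr; congr (_ + _); rewrite mulrCA.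
  rewrite (omg_any2 Hbr HS Hsym (inImD_lin a Hx Hy) (rep_spec Hz)).
  rewrite (omg_any2 Hbr HS Hsym Hx (rep_spec Hz)).
  rewrite (omg_any2 Hbr HS Hsym Hy (rep_spec Hz)).
  rewrite !big_distrr -big_split; apply: eq_bigr => p _ /=.
  by rewrite F_lin // mulrDr; congr (_ + _); rewrite mulrCA.
- move=> u v.
  rewrite (omg_any1 Hbr HS Hsym (inImD_Dmx br u) (inImD_D br v)) big_seq1 mul1r.
  exact: F_D.
- move=> x y Hx Hy.
  by rewrite (omg_any2 Hbr HS Hsym Hy (rep_spec Hx)).
- move=> x Hx H; apply: mx_ext => w; rewrite mul0mx; apply: Hnd => v'.
  have := H _ (inImD_Dmx br (consv w v')).
  rewrite (omg_any1 Hbr HS Hsym Hx (inImD_D br _)) big_seq1 mul1r /Fm.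
  by rewrite upd_consv consv0.
- move=> x y z Hx Hy Hz.
  have Hxy := closure Hbr Hl Hx Hy.
  have Hxz := closure Hbr Hl Hx Hz.
  rewrite (omg_any1 Hbr HS Hsym Hxy (rep_spec Hz)).
  rewrite (omg_any2 Hbr HS Hsym Hxz (rep_spec Hy)).
  have Ey : forall w, Fm S (commC x y) w =
      \sum_(q <- rep br y) q.2 * Fm S (commC x (Dmx br q.1)) w.
    move=> w; rewrite {1}(rep_spec Hy).
    apply: (lin_sumf (L := fun t => Fm S (commC x t) w)) => a t1 t2.
    by rewrite commC_linr F_lin.
  have Ez : forall w, Fm S (commC x z) w =
      \sum_(q <- rep br z) q.2 * Fm S (commC x (Dmx br q.1)) w.
    move=> w; rewrite {1}(rep_spec Hz).
    apply: (lin_sumf (L := fun t => Fm S (commC x t) w)) => a t1 t2.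
    by rewrite commC_linr F_lin.
  transitivity (\sum_(p <- rep br z) \sum_(q <- rep br y)
                  p.2 * q.2 * Fm S (commC x (Dmx br q.1)) p.1).
    apply: eq_bigr => p _; rewrite Ey big_distrr; apply: eq_bigr => q _.
    by rewrite /= mulrA.
  rewrite exchange_big -sumrN; apply: eq_bigr => q _.
  rewrite Ez big_distrr -sumrN; apply: eq_bigr => p _.
  rewrite (K_all Hbr Hl HS Hsym Hun _ _ Hx).
  by rewrite /= mulrN mulrA [p.2 * q.2]mulrC.
Qed.
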